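(* Let $A$ be an Archimedean semiprime $f$-algebra which is relatively uniformly complete. Then every intermediate algebra in $A$ (i.e., every subalgebra of $A$ containing $A_b$) is an order ideal of $A$.
   Context: An $f$-algebra is a real associative algebra that is a vector lattice with $A_+A_+\subseteq A_+$ and such that $a\wedge b=0$ implies $ac\wedge b=ca\wedge b=0$ for all $c\in A_+$; it is semiprime if $0$ is its only nilpotent element. $A_b=\{a\in A: a^2\le\mu|a|\text{ for some }\mu\in(0,\infty)\}$ is the set of bounded elements. An order ideal is a solid vector subspace. *)

(* Defs.v *)
From HB Require Import structures.
From mathcomp Require Import all_boot all_order all_algebra.
From mathcomp Require Import reals.
Set Implicit Arguments. Unset Strict Implicit. Unset Printing Implicit Defensive.
Import Order.TTheory GRing.Theory Num.Theory.
Local Open Scope ring_scope.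

Section FAlg.
Variables (R : realType) (A : lmodType R).
(* A (possibly non-unital) multiplication, an order relation, and the
   lattice operations of A, given explicitly. *)
Variables (mul : A -> A -> A) (le : A -> A -> Prop) (meet join : A -> A -> A).

Definition is_real_algebra : Prop :=
  (forall a b c, mul a (mul b c) = mul (mul a b) c) /\
  (forall a b c, mul (a + b) c = mul a c + mul b c) /\
  (forall a b c, mul a (b + c) = mul a b + mul a c) /\
  (forall (r : R) a b, mul (r *: a) b = r *: mul a b) /\
  (forall (r : R) a b, mul a (r *: b) = r *: mul a b).

Definition is_vector_lattice : Prop :=
  (forall x, le x x) /\
  (forall x y, le x y -> le y x -> x = y) /\
  (forall x y z, le x y -> le y z -> le x z) /\
  (forall x y z, le x y -> le (x + z) (y + z)) /\
  (forall (r : R) x, 0 <= r -> le 0 x -> le 0 (r *: x)) /\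
  (forall x y, le (meet x y) x /\ le (meet x y) y /\
     forall z, le z x -> le z y -> le z (meet x y)) /\
  (forall x y, le x (join x y) /\ le y (join x y) /\
     forall z, le x z -> le y z -> le (join x y) z).

Definition absv (x : A) : A := join x (- x).

Definition is_f_algebra : Prop :=
  is_real_algebra /\ is_vector_lattice /\
  (forall a b, le 0 a -> le 0 b -> le 0 (mul a b)) /\
  (forall a b c, meet a b = 0 -> le 0 c ->
     meet (mul a c) b = 0 /\ meet (mul c a) b = 0).

(* npow a n = a^(n+1) *)
Definition npow (a : A) (n : nat) : A := iter n (mul a) a.

Definition nilpotent_elt (a : A) : Prop := exists n, npow a n = 0.

Definition semiprime : Prop := forall a, nilpotent_elt a -> a = 0.

Definition archimedean_vl : Prop :=
  forall x y, le 0 x -> (forall n : nat, le (x *+ n) y) -> x = 0.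

Definition ru_converges (f : nat -> A) (g : A) : Prop :=
  exists u, le 0 u /\ forall eps : R, 0 < eps ->
    exists N, forall n, (N <= n)%N -> le (absv (f n - g)) (eps *: u).

Definition ru_cauchy (f : nat -> A) : Prop :=
  exists u, le 0 u /\ forall eps : R, 0 < eps ->
    exists N, forall n m, (N <= n)%N -> (N <= m)%N ->
      le (absv (f n - f m)) (eps *: u).

Definition ru_complete : Prop :=
  forall f, ru_cauchy f -> exists g, ru_converges f g.

Definition bounded_elt (a : A) : Prop :=
  exists mu : R, 0 < mu /\ le (mul a a) (mu *: absv a).

Definition subalgebra (B : A -> Prop) : Prop :=
  B 0 /\ (forall a b, B a -> B b -> B (a + b)) /\
  (forall (r : R) a, B a -> B (r *: a)) /\
  (forall a b, B a -> B b -> B (mul a b)).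

Definition intermediate_algebra (B : A -> Prop) : Prop :=
  subalgebra B /\ (forall a, bounded_elt a -> B a).

Definition order_ideal (B : A -> Prop) : Prop :=
  B 0 /\ (forall a b, B a -> B b -> B (a + b)) /\
  (forall (r : R) a, B a -> B (r *: a)) /\
  (forall a b, B b -> le (absv a) (absv b) -> B a).

End FAlg.

(* Main.v *)
Require Import Defs.
From mathcomp Require Import all_boot all_order all_algebra.
From mathcomp Require Import reals.
Set Implicit Arguments. Unset Strict Implicit. Unset Printing Implicit Defensive.
Import Order.TTheory GRing.Theory Num.Theory.
Local Open Scope ring_scope.
Lemma pow_small (R : realType) (eps : R) : 0 < eps -> exists N : nat, (2^-1 : R)^+N <= eps.
Proof.
move=> e0.
have : 0 <= eps^-1 by rewrite invr_ge0 ltW.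
move=> /archi_boundP hb.
set N := Num.Def.archi_bound _ in hb.
exists N.
have h2 : (N%:R : R) <= 2 ^+ N.
  have := ltn_expl N (isT : (1 < 2)%N). move/ltnW.
  by rewrite -(ler_nat R) natrX.
have hp : 0 < (2 : R) ^+ N by rewrite exprn_gt0.
rewrite exprVn -(invrK eps) lef_pV2 ?posrE ?invr_gt0 //.
exact: ltW (lt_le_trans hb h2).
Qed.

Section Basics.
Variables (R : realType) (A : lmodType R).
Variables (mul : A -> A -> A) (le : A -> A -> Prop) (meet join : A -> A -> A).
Hypothesis mulA : forall a b c, mul a (mul b c) = mul (mul a b) c.
Hypothesis mulDl : forall a b c, mul (a + b) c = mul a c + mul b c.
Hypothesis mulDr : forall a b c, mul a (b + c) = mul a b + mul a c.
Hypothesis mulZr : forall (r : R) a b, mul a (r *: b) = r *: mul a b.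
Hypothesis leR : forall x, le x x.
Hypothesis leAS : forall x y, le x y -> le y x -> x = y.
Hypothesis leT : forall x y z, le x y -> le y z -> le x z.
Hypothesis leD : forall x y z, le x y -> le (x + z) (y + z).
Hypothesis leZ : forall (r : R) x, 0 <= r -> le 0 x -> le 0 (r *: x).
Hypothesis meetP : forall x y, le (meet x y) x /\ le (meet x y) y /\
     forall z, le z x -> le z y -> le z (meet x y).
Hypothesis joinP : forall x y, le x (join x y) /\ le y (join x y) /\
     forall z, le x z -> le y z -> le (join x y) z.
Hypothesis mulP : forall a b, le 0 a -> le 0 b -> le 0 (mul a b).
Hypothesis fP : forall a b c, meet a b = 0 -> le 0 c ->
     meet (mul a c) b = 0 /\ meet (mul c a) b = 0.

Lemma mI1 x y : le (meet x y) x. Proof. by case: (meetP x y). Qed.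
Lemma mI2 x y : le (meet x y) y. Proof. by case: (meetP x y) => _ []. Qed.
Lemma mIL x y z : le z x -> le z y -> le z (meet x y). Proof. by case: (meetP x y) => _ [_ H]; apply: H. Qed.
Lemma jU1 x y : le x (join x y). Proof. by case: (joinP x y). Qed.
Lemma jU2 x y : le y (join x y). Proof. by case: (joinP x y) => _ []. Qed.
Lemma jUL x y z : le x z -> le y z -> le (join x y) z. Proof. by case: (joinP x y) => _ [_ H]; apply: H. Qed.

Lemma subr_ge0' x y : le x y -> le 0 (y - x).
Proof. by move=> h; have := leD (- x) h; rewrite subrr. Qed.
Lemma subr_le x y : le 0 (y - x) -> le x y.
Proof. by move=> h; have := leD x h; rewrite add0r subrK. Qed.
Lemma leD2 x y u v : le x y -> le u v -> le (x + u) (y + v).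
Proof.
move=> h1 h2; apply: (leT (leD u h1)).
by have := leD y h2; rewrite ![_ + y]addrC.
Qed.
Lemma leDl x u v : le u v -> le (x + u) (x + v).
Proof. by move=> h; apply: leD2. Qed.
Lemma leN x y : le x y -> le (- y) (- x).
Proof.
move=> h; have := leD (- x - y) h.
by rewrite addrA subrr add0r addrCA subrr addr0.
Qed.
Lemma leN' x y : le (- y) (- x) -> le x y.
Proof. by move/leN; rewrite !opprK. Qed.
Lemma add_ge0 x y : le 0 x -> le 0 y -> le 0 (x + y).
Proof. by move=> h1 h2; have := leD2 h1 h2; rewrite addr0. Qed.
Lemma le_addr x y : le 0 y -> le x (x + y).
Proof. by move=> h; have := leDl x h; rewrite addr0. Qed.
Lemma le_subl x y : le 0 y -> le (x - y) x.
Proof. by move=> h; have := leDl x (leN h); rewrite oppr0 addr0. Qed.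
Lemma le_sub_move x y z : le (x - z) y -> le x (y + z).
Proof. by move=> h; have := leD z h; rewrite subrK. Qed.
Lemma le_move_sub x y z : le (x + z) y -> le x (y - z).
Proof. by move=> h; have := leD (- z) h; rewrite addrK. Qed.
Lemma le_add_move x y z : le x (y - z) -> le (x + z) y.
Proof. by move=> h; have := leD z h; rewrite subrK. Qed.
Lemma le_sub2 a x z : le a (x + z) -> le (a - z) x.
Proof. by move=> h; have := leD (- z) h; rewrite addrK. Qed.
Lemma leZ2 (r : R) x y : 0 <= r -> le x y -> le (r *: x) (r *: y).
Proof. by move=> r0 h; apply: subr_le; rewrite -scalerBr; apply: leZ => //; apply: subr_ge0'. Qed.
Lemma leZr (r1 r2 : R) x : r1 <= r2 -> le 0 x -> le (r1 *: x) (r2 *: x).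
Proof. by move=> r12 h; apply: subr_le; rewrite -scalerBl; apply: leZ => //; rewrite subr_ge0. Qed.

Lemma mul0 c : mul c 0 = 0.
Proof. by have := mulDr c 0 0; rewrite addr0 => /(congr1 (fun z => z - mul c 0)); rewrite subrr addrK. Qed.
Lemma mul0l c : mul 0 c = 0.
Proof. by have := mulDl 0 0 c; rewrite addr0 => /(congr1 (fun z => z - mul 0 c)); rewrite subrr addrK. Qed.
Lemma mulN c x : mul c (- x) = - mul c x.
Proof. by apply/eqP; rewrite -subr_eq0 opprK -mulDr addNr mul0. Qed.
Lemma mulNl c x : mul (- x) c = - mul x c.
Proof. by apply/eqP; rewrite -subr_eq0 opprK -mulDl addNr mul0l. Qed.
Lemma mulBr c x y : mul c (x - y) = mul c x - mul c y.
Proof. by rewrite mulDr mulN. Qed.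
Lemma mulBl c x y : mul (x - y) c = mul x c - mul y c.
Proof. by rewrite mulDl mulNl. Qed.
Lemma mul_lel c x y : le 0 c -> le x y -> le (mul c x) (mul c y).
Proof. by move=> c0 h; apply: subr_le; rewrite -mulBr; apply: mulP => //; apply: subr_ge0'. Qed.
Lemma mul_ler c x y : le 0 c -> le x y -> le (mul x c) (mul y c).
Proof. by move=> c0 h; apply: subr_le; rewrite -mulBl; apply: mulP => //; apply: subr_ge0'. Qed.

Lemma joinC x y : join x y = join y x.
Proof. by apply: leAS; apply: jUL; [apply: jU2 | apply: jU1 | apply: jU2 | apply: jU1]. Qed.
Lemma meetC x y : meet x y = meet y x.
Proof. by apply: leAS; apply: mIL; [apply: mI2 | apply: mI1 | apply: mI2 | apply: mI1]. Qed.
Lemma meetxx x : meet x x = x.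
Proof. by apply: leAS; [apply: mI1 | apply: mIL]. Qed.
Lemma joinD x y z : join x y + z = join (x + z) (y + z).
Proof.
apply: leAS.
  apply: le_add_move; apply: jUL; apply: le_move_sub; [apply: jU1 | apply: jU2].
by apply: jUL; apply: leD; [apply: jU1 | apply: jU2].
Qed.
Lemma oppJ x y : - join x y = meet (- x) (- y).
Proof.
apply: leAS.
  by apply: mIL; apply: leN; [apply: jU1 | apply: jU2].
apply: leN'; rewrite opprK; apply: jUL; apply: leN'; rewrite opprK;
  [apply: mI1 | apply: mI2].
Qed.
Lemma oppM x y : - meet x y = join (- x) (- y).
Proof. by rewrite -[x]opprK -[y]opprK -oppJ !opprK. Qed.
Lemma meetD x y z : meet x y + z = meet (x + z) (y + z).
Proof.
apply: leAS.
  by apply: mIL; apply: leD; [apply: mI1 | apply: mI2].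
apply: le_sub_move; apply: mIL; apply: le_sub2;  [apply: mI1 | apply: mI2].
Qed.
Lemma JM x y : x + y = join x y + meet x y.
Proof.
apply/eqP; rewrite -subr_eq oppM addrC joinD; apply/eqP.
by rewrite addrA addNr add0r addrCA addNr addr0 joinC.
Qed.

Definition pos x := join x 0.
Definition neg x := join (- x) 0.
Lemma pos_ge0 x : le 0 (pos x). Proof. exact: jU2. Qed.
Lemma neg_ge0 x : le 0 (neg x). Proof. exact: jU2. Qed.
Lemma le_pos x : le x (pos x). Proof. exact: jU1. Qed.
Lemma le_neg x : le (- x) (neg x). Proof. exact: jU1. Qed.
Lemma pos_neg x : pos x - neg x = x.
Proof. by rewrite /neg -oppr0 -oppM opprK /pos -JM addr0. Qed.
Lemma neg_pos x : neg x = pos x - x.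
Proof. by apply/eqP; rewrite eq_sym subr_eq [neg x + x]addrC -subr_eq pos_neg. Qed.
Lemma negN x : neg (- x) = pos x.
Proof. by rewrite /neg opprK. Qed.
Lemma pos_neg_disj x : meet (pos x) (neg x) = 0.
Proof.
rewrite neg_pos [pos x - x]addrC -{1}[pos x]add0r -meetD.
have -> : meet 0 (- x) = - join 0 x by rewrite oppJ oppr0.
by rewrite joinC addNr.
Qed.
Lemma disj_sum u v : meet u v = 0 -> u + v = join u v.
Proof. by move=> h; rewrite JM h addr0. Qed.
Lemma meet_ge0 u v : le 0 u -> le 0 v -> le 0 (meet u v).
Proof. by move=> *; apply: mIL. Qed.
Lemma disj_mono u u' v v' : le 0 u -> le u u' -> le 0 v -> le v v' ->
  meet u' v' = 0 -> meet u v = 0.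
Proof.
move=> u0 uu v0 vv h; apply: leAS; last by apply: meet_ge0.
rewrite -h; apply: mIL; [apply: leT (mI1 _ _) uu | apply: leT (mI2 _ _) vv].
Qed.
Lemma disj_mul p q : meet p q = 0 -> le 0 p -> le 0 q -> mul p q = 0 /\ mul q p = 0.
Proof.
move=> h p0 q0; split.
  have [h1 _] := fP h q0; rewrite meetC in h1.
  have [_ h2] := fP h1 p0; by rewrite meetxx in h2.
have [_ h1] := fP h q0; rewrite meetC in h1.
have [h2 _] := fP h1 p0; by rewrite meetxx in h2.
Qed.


Lemma key e P s : le 0 e -> le 0 P -> le 0 s -> le P (e + mul s e) ->
  le P (meet e P + mul s (meet e P)).
Proof.
move=> e0 P0 s0 hP.
set q := meet e P.
have q0 : le 0 q by apply: meet_ge0.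
have hA1 : P - q = pos (P - e).
  by rewrite addrC oppM joinD addNr /pos addrC.
have hA2 : e - q = neg (P - e).
  by rewrite addrC oppM joinD addNr /neg opprB joinC addrC.
set A1 := P - q in hA1. set A2 := e - q in hA2.
have dis : meet A1 A2 = 0 by rewrite hA1 hA2 pos_neg_disj.
have dis2 : meet (mul s A2) A1 = 0.
  by have [_ ->] := fP (etrans (meetC _ _) dis) s0.
have A1le : le A1 (mul s e).
  rewrite hA1; apply: jUL; last exact: mulP.
  by apply: le_sub2; rewrite addrC.
have A2le : le A2 e by apply: le_subl.
have hsum : le (A1 + mul s A2) (mul s e).
  rewrite disj_sum; last by rewrite meetC.
  by apply: jUL => //; apply: mul_lel.
have -> : q = e - A2 by rewrite /A2 opprB addrC subrK.
rewrite mulBr.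
have -> : P = A1 + (e - A2) by rewrite /A1 /A2 opprB [e + _]addrCA subrr addr0 subrK.
rewrite [A1 + _]addrC; apply: leDl.
by apply: le_move_sub.
Qed.

Hypothesis semip : forall a, (exists n, iter n (mul a) a = 0) -> a = 0.

Lemma bnd y c : le 0 y -> le 0 c -> le (y + mul c y) c -> le (mul y y) y.
Proof.
move=> y0 c0 h.
set u := mul y y - y. set w := pos u. set v := mul y w.
have w0 : le 0 w := pos_ge0 u.
have v0 : le 0 v by apply: mulP.
have huw : mul u w = mul w w.
  have [_ hnp] := disj_mul (pos_neg_disj u) (pos_ge0 u) (neg_ge0 u).
  by rewrite -{1}(pos_neg u) mulBl hnp subr0.
have hyv : mul y v = v + mul w w.
  by rewrite -huw /u mulBl -mulA addrC subrK.
have hc : le 0 (mul (c - (y + mul c y)) v) by apply: mulP => //; apply: subr_ge0'.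
rewrite mulBl mulDl -mulA hyv mulDr in hc.
have h2 := subr_le hc.
have h3 : le (mul w w + mul c v) (v + mul w w + (mul c v + mul c (mul w w))).
  rewrite [v + _]addrC addrACA; apply: le_addr; apply: add_ge0 => //.
  by apply: mulP => //; apply: mulP.
have ww0 : le (mul w w) 0.
  by have := leD (- mul c v) (leT h3 h2); rewrite addrK subrr.
have wwe : mul w w = 0 by apply: leAS => //; exact: mulP.
have we : w = 0 by apply: semip; exists 1%N.
have : le u 0 by rewrite -we; exact: le_pos.
by move/le_sub_move; rewrite add0r.
Qed.


Hypothesis arch : forall x y, le 0 x -> (forall n : nat, le (x *+ n) y) -> x = 0.

Lemma archZ z U : le 0 U -> (forall eps : R, 0 < eps -> le z (eps *: U)) -> le z 0.
Proof.
move=> U0 h.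
have p0 : pos z = 0.
  apply: (@arch _ U (pos_ge0 z)) => -[|n]; first by rewrite mulr0n.
  have hn : (0 : R) < n.+1%:R by rewrite ltr0n.
  have hp : le (pos z) (n.+1%:R^-1 *: U).
    apply: jUL; first by apply: h; rewrite invr_gt0.
    by apply: leZ => //; rewrite invr_ge0 ltW.
  have := leZ2 (ltW hn) hp.
  by rewrite scalerA mulfV ?scale1r ?pnatr_eq0 // scaler_nat.
by rewrite -p0; apply: le_pos.
Qed.

Hypothesis compl : ru_complete le join.

Section Div.
Variables (x s : A).
Hypotheses (x0 : le 0 x) (s0 : le 0 s).

Definition phi z := x - z - mul s z.
Definition step (p : A * A) :=
  let e := (2^-1 : R) *: (p.2 - p.1) in let m := p.1 + e in let f := phi m in
  (m - meet e (neg f), m + meet e (pos f)).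
Definition sq n := iter n step (0, x).
Definition Inv (p : A * A) (r : R) :=
  le p.1 p.2 /\ le 0 (phi p.1) /\ le (phi p.2) 0 /\ le (p.2 - p.1) (r *: x).

Lemma phi_add z t : phi (z + t) = phi z - (t + mul s t).
Proof.
rewrite /phi mulDr !opprD !addrA; congr (_ + _).
by rewrite addrAC.
Qed.
Lemma phi_sub z t : phi (z - t) = phi z + (t + mul s t).
Proof. by rewrite phi_add mulN -opprD opprK. Qed.

Lemma step_inv l h r : 0 <= r -> Inv (l, h) r ->
  Inv (step (l, h)) (2^-1 * r) /\ le l (step (l, h)).1 /\ le (step (l, h)).2 h.
Proof.
move=> r0 [/= lh [pl [ph wd]]].
rewrite /step /=.
set e := (2^-1 : R) *: (h - l). set m := l + e. set f := phi m.
set t1 := meet e (pos f). set t2 := meet e (neg f).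
have e0 : le 0 e by apply: leZ; [rewrite invr_ge0 ler0n | apply: subr_ge0'].
have hl : l = m - e by rewrite /m addrK.
have hee : e + e = h - l.
  rewrite /e -scalerDl (_ : 2^-1 + 2^-1 = 1) ?scale1r //.
  by rewrite {3}(splitr 1) mul1r.
have hh : h = m + e by rewrite /m -addrA hee addrC subrK.
have t10 : le 0 t1 by apply: meet_ge0 => //; apply: pos_ge0.
have t20 : le 0 t2 by apply: meet_ge0 => //; apply: neg_ge0.
have t1e : le t1 e by apply: mI1.
have t2e : le t2 e by apply: mI1.
have se0 : le 0 (e + mul s e) by apply: add_ge0 => //; apply: mulP.
have fle : le f (e + mul s e).
  move: ph; rewrite hh phi_add => /le_sub_move; by rewrite add0r.
have nfle : le (- f) (e + mul s e).
  move: pl; rewrite hl phi_sub => /(leD (- f)).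
  by rewrite add0r addrC addKr.
have k1 : le (pos f) (t1 + mul s t1).
  apply: key => //; first exact: pos_ge0.
  by apply: jUL.
have k2 : le (neg f) (t2 + mul s t2).
  apply: key => //; first exact: neg_ge0.
  by apply: jUL.
have dis : meet t1 t2 = 0.
  apply: (disj_mono t10 (mI2 _ _) t20 (mI2 _ _)).
  exact: pos_neg_disj.
split; last split.
- split => /=.
    by apply: (leT (le_subl _ t20)); apply: le_addr.
  split.
    rewrite phi_sub; have := leD f (leT (le_neg f) k2).
    by rewrite addNr addrC.
  split.
    rewrite phi_add; have := leD (- (t1 + mul s t1)) (leT (le_pos f) k1).
    by rewrite subrr.
  have -> : m + t1 - (m - t2) = t1 + t2.
    by rewrite opprB addrC addrA subrK addrC.
  have eb : le e ((2^-1 * r) *: x).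
    by rewrite -scalerA; apply: leZ2 => //; rewrite invr_ge0 ler0n.
  by rewrite disj_sum //; apply: jUL; [exact: (leT t1e eb) | exact: (leT t2e eb)].
- by rewrite /= {1}hl; apply: leDl; apply: leN.
- by rewrite /=; apply: (@leT _ (m + e)); [apply: leDl | rewrite -hh; apply: leR].
Qed.

Lemma Inv0 : Inv (0, x) 1.
Proof.
rewrite /Inv /phi /=; split => //; split.
  by rewrite mul0 !subr0.
split.
  by rewrite subrr add0r; have := leN (mulP s0 x0); rewrite oppr0.
by rewrite subr0 scale1r; apply: leR.
Qed.

Lemma sq_inv n : Inv (sq n) ((2^-1)^+n).
Proof.
elim: n => [|n IH]; first by rewrite expr0; exact: Inv0.
rewrite /sq iterS -/(sq n) exprS.
case E: (sq n) IH => [l h] IH.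
apply: (step_inv _ IH).1.
by rewrite exprn_ge0 // invr_ge0 ler0n.
Qed.

Lemma sq_mono n : le (sq n).1 (sq n.+1).1 /\ le (sq n.+1).2 (sq n).2.
Proof.
have := sq_inv n.
rewrite /sq iterS -/(sq n).
case E: (sq n) => [l h] IH.
apply: (step_inv _ IH).2.
by rewrite exprn_ge0 // invr_ge0 ler0n.
Qed.

Lemma chains N n : (N <= n)%N -> le (sq N).1 (sq n).1 /\ le (sq n).2 (sq N).2.
Proof.
elim: n => [|n IH].
  by rewrite leqn0 => /eqP ->; split; apply: leR.
rewrite leq_eqVlt => /orP [/eqP -> | ]; first by split; apply: leR.
rewrite ltnS => /IH [h1 h2].
have [m1 m2] := sq_mono n.
by split; [exact: leT h1 m1 | exact: leT m2 h2].
Qed.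

Lemma width N n : (N <= n)%N -> le ((sq n).2 - (sq n).1) ((2^-1)^+N *: x).
Proof.
move=> hn; have [c1 c2] := chains hn.
have [_ [_ [_ w]]] := sq_inv N.
by apply: leT w; apply: leD2 => //; apply: leN.
Qed.

Lemma diff_le N n m : (N <= n)%N -> (N <= m)%N ->
  le ((sq n).1 - (sq m).1) ((2^-1)^+N *: x).
Proof.
move=> hn hm.
have [c1 c2] := chains hn. have [c3 c4] := chains hm.
have [lh _] := sq_inv n.
have [_ [_ [_ w]]] := sq_inv N.
apply: leT w; apply: leD2; last by apply: leN.
exact: leT lh c2.
Qed.


Lemma div_exists : exists y, le 0 y /\ le y x /\ y + mul s y = x.
Proof.
have cauchy : ru_cauchy le join (fun n => (sq n).1).
  exists x; split => // eps e0.
  have [N hN] := pow_small e0.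
  exists N => n m hn hm.
  apply: jUL.
    by apply: leT (diff_le hn hm) _; apply: leZr.
  by rewrite opprB; apply: leT (diff_le hm hn) _; apply: leZr.
have [y [u [u0 conv]]] := compl cauchy.
exists y.
have L0 n : le 0 (sq n).1 by have [h _] := chains (leq0n n).
have Hx n : le (sq n).2 x by have [_ h] := chains (leq0n n).
have LH n : le (sq n).1 (sq n).2 by have [h _] := sq_inv n.
have dl n : le ((sq n).1 - y) (absv join ((sq n).1 - y)) := jU1 _ _.
have dr n : le (y - (sq n).1) (absv join ((sq n).1 - y)).
  by rewrite -opprB; apply: jU2.
have y0 : le 0 y.
  apply: leN'; rewrite oppr0; apply: (archZ u0) => eps e0.
  have [N hN] := conv eps e0.
  apply: leT (hN N (leqnn N)).
  by apply: leT (dl N); have := leD (- y) (L0 N); rewrite add0r.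
split => //; split.
  apply: subr_le; apply: leN'; rewrite oppr0 opprB.
  apply: (archZ u0) => eps e0.
  have [N hN] := conv eps e0.
  apply: leT (hN N (leqnn N)).
  apply: leT (dr N); apply: leDl; apply: leN; exact: leT (LH N) (Hx N).
have su0 : le 0 (mul s u) by apply: mulP.
have p1 : le 0 (phi y).
  apply: leN'; rewrite oppr0.
  apply: (archZ (add_ge0 u0 su0)) => eps e0.
  have [N hN] := conv eps e0.
  have -> : phi y = phi (sq N).1 - ((y - (sq N).1) + mul s (y - (sq N).1)).
    by rewrite -phi_add [(sq N).1 + _]addrC subrK.
  rewrite opprD opprK; have [_ [pl _]] := sq_inv N.
  rewrite -[_ *: _]add0r; apply: leD2.
    by have := leN pl; rewrite oppr0.
  rewrite scalerDr; apply: leD2.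
    exact: leT (dr N) (hN N (leqnn N)).
  rewrite -mulZr; apply: mul_lel => //.
  exact: leT (dr N) (hN N (leqnn N)).
have ux0 : le 0 (u + x) by apply: add_ge0.
have sux0 : le 0 (mul s (u + x)) by apply: mulP.
have p2 : le (phi y) 0.
  apply: (archZ (add_ge0 ux0 sux0)) => eps e0.
  have [N1 hN1] := conv eps e0.
  have [N2 hN2] := pow_small e0.
  set n := maxn N1 N2.
  have n1 : (N1 <= n)%N by apply: leq_maxl.
  have n2 : (N2 <= n)%N by apply: leq_maxr.
  have -> : phi y = phi (sq n).2 + (((sq n).2 - y) + mul s ((sq n).2 - y)).
    by rewrite -phi_sub opprB addrC subrK.
  have [_ [_ [ph _]]] := sq_inv n.
  rewrite -[_ *: _]add0r; apply: leD2 => //.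
  have g : le ((sq n).2 - y) (eps *: (u + x)).
    have -> : (sq n).2 - y = ((sq n).2 - (sq n).1) + ((sq n).1 - y).
      by rewrite addrA subrK.
    rewrite scalerDr addrC; apply: leD2.
      exact: leT (dl n) (hN1 n n1).
    by apply: leT (width n2) _; apply: leZr.
  rewrite scalerDr; apply: leD2 => //.
  by rewrite -mulZr; apply: mul_lel.
have E : phi y = 0 by apply: leAS.
by apply/eqP; rewrite eq_sym -subr_eq0 opprD addrA -/(phi y) E.
Qed.

End Div.

Lemma absv_ge0 t : le 0 (absv join t).
Proof.
set T := absv join t.
have h : le 0 (T + T) by have := leD2 (jU1 t (- t)) (jU2 t (- t)); rewrite subrr.
have i0 : (0 : R) <= 2^-1 by rewrite invr_ge0 ler0n.
have := leZ i0 h.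
by rewrite -mulr2n -scaler_nat scalerA mulVf ?pnatr_eq0 // scale1r.
Qed.

Lemma absv_id y : le 0 y -> absv join y = y.
Proof.
move=> y0; apply: leAS; last exact: jU1.
apply: jUL; first exact: leR.
by have := leN y0; rewrite oppr0 => h; exact: leT h y0.
Qed.

Section Main.
Variable B : A -> Prop.
Hypothesis HB : intermediate_algebra mul le join B.

Lemma core b g : B b -> le 0 g -> le g (pos b) -> B g.
Proof.
case: HB => [[B0 [BD [BZ BM]]] Bb] hb g0 gp.
set p := pos b; set q := neg b; set c := p + q.
have p0 : le 0 p := pos_ge0 b.
have q0 : le 0 q := neg_ge0 b.
have c0 : le 0 c by apply: add_ge0.
have [y [y0 [yg hy]]] := div_exists g0 c0.
have yp : le y p := leT yg gp.
have [_ hqp] := disj_mul (pos_neg_disj b) p0 q0.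
have qy : mul q y = 0.
  apply: leAS; last exact: mulP.
  by rewrite -hqp; apply: mul_lel.
have cy : mul c y = mul b y by rewrite /c mulDl qy addr0 -(pos_neg b) mulBl -/p -/q qy subr0.
have yb : bounded_elt mul le join y.
  exists 1; split => //; rewrite scale1r absv_id //.
  apply: (@bnd y c y0 c0).
  rewrite hy; apply: leT gp _; exact: le_addr.
rewrite -hy cy; apply: BD; first exact: Bb.
by apply: BM => //; exact: Bb.
Qed.

Lemma main_sec : order_ideal le join B.
Proof.
have [[B0 [BD [BZ BM]]] Bb] := HB.
split => //; split => //; split => //.
move=> a b hb hab.
have hpn : le (absv join b) (pos b + neg b).
  apply: jUL.
    by apply: leT (le_pos b) _; apply: le_addr; apply: neg_ge0.
  by apply: leT (le_neg b) _; rewrite addrC; apply: le_addr; apply: pos_ge0.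
have solid g : le 0 g -> le g (pos b + neg b) -> B g.
  move=> g0 gle.
  set g1 := meet g (pos b).
  have g10 : le 0 g1 by apply: meet_ge0 => //; apply: pos_ge0.
  have B1 : B g1 by apply: (core hb g10); apply: mI2.
  have Bmb : B (- b) by rewrite -scaleN1r; apply: BZ.
  have g2e : g - g1 = join 0 (- pos b + g).
    by rewrite addrC /g1 oppM joinD addNr.
  have B2 : B (g - g1).
    apply: (core Bmb); first by apply: subr_ge0'; apply: mI1.
    rewrite g2e; apply: jUL; first exact: neg_ge0.
    rewrite addrC; apply: le_sub2; rewrite addrC; exact: gle.
  by rewrite -(subrK g1 g) addrC; apply: BD.
rewrite -(pos_neg a); apply: BD.
  apply: solid; first exact: pos_ge0.
  apply: leT hpn; apply: leT hab; apply: jUL; [exact: jU1 | exact: absv_ge0].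
rewrite -scaleN1r; apply: BZ; apply: solid; first exact: neg_ge0.
apply: leT hpn; apply: leT hab; apply: jUL; [exact: jU2 | exact: absv_ge0].
Qed.

End Main.

End Basics.


Theorem corollary9 (R : realType) (A : lmodType R)
  (mul : A -> A -> A) (le : A -> A -> Prop) (meet join : A -> A -> A) :
  is_f_algebra mul le meet join ->
  archimedean_vl le ->
  semiprime mul ->
  ru_complete le join ->
  forall B : A -> Prop,
    intermediate_algebra mul le join B -> order_ideal le join B.
Proof.
move=> [[mA [mDl [mDr [mZl mZr]]]] [[lR [lAS [lT [lD [lZ [mP jP]]]]]] [mulP fP]]] ar sp co B HB.
eapply main_sec; try eassumption.
Qed.
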